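(* Let $G,H,F,K$ be graphs such that there is a quantum homomorphism from $G$ to $F$ and a quantum homomorphism from $H$ to $K$. Then there are quantum homomorphisms (1) from $G\,\square\,H$ to $F\,\square\,K$; (2) from $G\times H$ to $F\times K$; (3) from $G\boxtimes H$ to $F\boxtimes K$; (4) from $G * H$ to $F * K$; (5) from $G[H]$ to $F[K]$.
   Context: Graphs are finite, simple and undirected; no vertex is adjacent to itself. All products below have vertex set $V(G)\times V(H)$. Cartesian product $G\,\square\,H$: $(u_1,v_1)\sim(u_2,v_2)$ iff ($u_1\sim u_2$ and $v_1=v_2$) or ($u_1=u_2$ and $v_1\sim v_2$). Categorical product $G\times H$: iff $u_1\sim u_2$ and $v_1\sim v_2$. Strong product $G\boxtimes H$: the edge union of $G\times H$ and $G\,\square\,H$. Disjunctive product $G*H$: iff $u_1\sim u_2$ or $v_1\sim v_2$. Lexicographic product $G[H]$: iff $u_1\sim u_2$, or ($u_1=u_2$ and $v_1\sim v_2$). For a graph $F$ and integer $d\ge1$, the measurement graph $M(F,d)$ has as vertices all tuples $(E_w)_{w\in V(F)}$ of orthogonal projectors in $\mathbb{C}^{d\times d}$ with $\sum_w E_w=I$; $(E_w)$ and $(E'_w)$ are adjacent iff $E_wE'_{w'}=0$ for all $w,w'$ with $w\not\sim w'$ (including $w=w'$). A quantum homomorphism from $G$ to $F$ is a graph homomorphism from $G$ to $M(F,d)$ for some $d$. *)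

(* Defs.v *)
From mathcomp Require Import all_boot all_algebra.
From mathcomp Require Import complex.
From mathcomp Require Import Rstruct.
Set Implicit Arguments.
Unset Strict Implicit.
Unset Printing Implicit Defensive.
Import GRing.Theory Num.Theory.
Local Open Scope ring_scope.

Definition CC : numClosedFieldType := (Rdefinitions.R)[i].

Definition simple_graph (V : finType) (e : rel V) : Prop :=
  symmetric e /\ irreflexive e.

Section Products.
Variables (V W : finType) (eG : rel V) (eH : rel W).

Definition cart_prod : rel (V * W) := fun x y =>
  (eG x.1 y.1 && (x.2 == y.2)) || ((x.1 == y.1) && eH x.2 y.2).

Definition cat_prod : rel (V * W) := fun x y => eG x.1 y.1 && eH x.2 y.2.

Definition strong_prod : rel (V * W) := fun x y => cat_prod x y || cart_prod x y.

Definition disj_prod : rel (V * W) := fun x y => eG x.1 y.1 || eH x.2 y.2.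

Definition lex_prod : rel (V * W) := fun x y =>
  eG x.1 y.1 || ((x.1 == y.1) && eH x.2 y.2).
End Products.

Definition orth_proj (d : nat) (E : 'M[CC]_d) : Prop :=
  E *m E = E /\ map_mx Num.conj E^T = E.

(* Vertices of the measurement graph M(F,d): tuples (E_w)_{w in V(F)} of
   orthogonal projectors summing to the identity. *)
Definition meas_vertex (VF : finType) (d : nat) (E : VF -> 'M[CC]_d) : Prop :=
  (forall w, orth_proj (E w)) /\ \sum_(w : VF) E w = 1%:M.

Definition meas_adj (VF : finType) (eF : rel VF) (d : nat)
    (E E' : VF -> 'M[CC]_d) : Prop :=
  forall w w' : VF, ~~ eF w w' -> E w *m E' w' = 0.

(* A quantum homomorphism from G to F: a graph homomorphism from G to
   M(F,d) for some d >= 1. *)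
Definition quantum_hom (VG VF : finType) (eG : rel VG) (eF : rel VF) : Prop :=
  exists (d : nat) (p : VG -> VF -> 'M[CC]_d),
    (0 < d)%N /\
    (forall x, meas_vertex (p x)) /\
    (forall x y, eG x y -> meas_adj eF (p x) (p y)).

(* Main.v *)
Require Import Defs.
From mathcomp Require Import all_boot all_algebra.
From mathcomp Require Import complex Rstruct mxtens.
Import GRing.Theory Num.Theory.
Local Open Scope ring_scope.
Set Implicit Arguments. Unset Strict Implicit.

Definition adjm {d} (A : 'M[CC]_d) : 'M[CC]_d := map_mx Num.conj A^T.

Lemma adjmM d (A B : 'M[CC]_d) : adjm (A *m B) = adjm B *m adjm A.
Proof. by rewrite /adjm trmx_mul (map_mxM Num.conj). Qed.

Lemma tr_adj d (A : 'M[CC]_d) : \tr (A *m adjm A) = \sum_i \sum_j A i j * (A i j)^*.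
Proof.
rewrite /mxtrace; apply: eq_bigr => i _; rewrite mxE.
by apply: eq_bigr => j _; rewrite !mxE.
Qed.

Lemma tr_adj_ge0 d (A : 'M[CC]_d) : 0 <= \tr (A *m adjm A).
Proof.
rewrite tr_adj; apply: sumr_ge0 => i _; apply: sumr_ge0 => j _.
exact: mul_conjC_ge0.
Qed.

Lemma tr_adj_eq0 d (A : 'M[CC]_d) : \tr (A *m adjm A) = 0 -> A = 0.
Proof.
rewrite tr_adj => H; apply/matrixP => i j; rewrite mxE.
have Hi := psumr_eq0P (fun i _ => sumr_ge0 _ (fun j _ => mul_conjC_ge0 (A i j))) H.
have Hj : A i j * (A i j)^* = 0 := psumr_eq0P (fun j _ => mul_conjC_ge0 (A i j)) (Hi i isT) isT.
by apply/eqP; rewrite -mul_conjC_eq0 Hj.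
Qed.

Lemma meas_orth (VF : finType) d (E : VF -> 'M[CC]_d) :
  meas_vertex E -> forall w w', w != w' -> E w *m E w' = 0.
Proof.
move=> [Hp Hs] w w' ne.
have adjE v : adjm (E v) = E v by case: (Hp v).
have idE v : E v *m E v = E v by case: (Hp v).
have key v : (E w *m E v) *m adjm (E w *m E v) = E w *m E v *m E w.
  by rewrite adjmM !adjE -!mulmxA (mulmxA (E v)) idE.
have S : \sum_(v | v != w) E v = 1%:M - E w.
  by rewrite -Hs [X in _ = X - _](bigD1 w) //= addrC addrK.
have Z : \sum_(v | v != w) (E w *m E v *m E w) = 0.
  rewrite -mulmx_suml -mulmx_sumr S mulmxBr mulmx1 idE subrr mul0mx //.
have T : \sum_(v | v != w) \tr ((E w *m E v) *m adjm (E w *m E v)) = 0.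
  under eq_bigr => v _ do rewrite key.
  by rewrite -(raddf_sum (@mxtrace _ d)) Z raddf0.
have ne' : w' != w by rewrite eq_sym.
have := psumr_eq0P (fun v _ => tr_adj_ge0 (E w *m E v)) T ne'.
move/tr_adj_eq0. done.
Qed.

Lemma tens_sum (I J : finType) m n (A : I -> 'M[CC]_m) (B : J -> 'M[CC]_n) :
  \sum_(p : I * J) (A p.1 *t B p.2) = (\sum_i A i) *t (\sum_j B j).
Proof.
apply/matrixP => a b.
case: (mxtens_indexP a) => i j; case: (mxtens_indexP b) => k l.
rewrite tensmxE !summxE mulr_suml.
under [RHS]eq_bigr => u _ do rewrite mulr_sumr.
rewrite pair_big; apply: eq_bigr => -[u v] _ /=.
by rewrite tensmxE.
Qed.

Lemma tens11 m n : (1%:M : 'M[CC]_m) *t (1%:M : 'M[CC]_n) = 1%:M.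
Proof.
apply/matrixP => a b.
case: (mxtens_indexP a) => i j; case: (mxtens_indexP b) => k l.
rewrite tensmxE !mxE (inj_eq (can_inj (@mxtens_indexK m n))) xpair_eqE.
by rewrite -natrM mulnb.
Qed.

Lemma tens_orth m n (A : 'M[CC]_m) (B : 'M[CC]_n) :
  orth_proj A -> orth_proj B -> orth_proj (A *t B).
Proof.
move=> [A1 A2] [B1 B2]; split; first by rewrite tensmx_mul A1 B1.
by rewrite trmx_tens (map_mxT Num.conj) A2 B2.
Qed.

Definition tensP (VG VF VH VK : finType) d1 d2
  (p : VG -> VF -> 'M[CC]_d1) (q : VH -> VK -> 'M[CC]_d2) :
  VG * VH -> VF * VK -> 'M[CC]_(d1 * d2) :=
  fun x w => p x.1 w.1 *t q x.2 w.2.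

Lemma tensP_vertex (VG VF VH VK : finType) d1 d2
  (p : VG -> VF -> 'M[CC]_d1) (q : VH -> VK -> 'M[CC]_d2) :
  (forall x, meas_vertex (p x)) -> (forall y, meas_vertex (q y)) ->
  forall x, meas_vertex (tensP p q x).
Proof.
move=> Hp Hq [x y]; split.
  move=> [w k]; apply: tens_orth; [exact: (Hp x).1 | exact: (Hq y).1].
rewrite /tensP /= (tens_sum (p x) (q y)) (Hp x).2 (Hq y).2.
exact: tens11.
Qed.

Section Main.
Variables (VG VH VF VK : finType)
    (eG : rel VG) (eH : rel VH) (eF : rel VF) (eK : rel VK).
Variables (d1 d2 : nat) (p : VG -> VF -> 'M[CC]_d1) (q : VH -> VK -> 'M[CC]_d2).
Hypotheses (Hp : forall x, meas_vertex (p x)) (Hq : forall y, meas_vertex (q y))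
  (Ap : forall x y, eG x y -> meas_adj eF (p x) (p y))
  (Aq : forall x y, eH x y -> meas_adj eK (q x) (q y)).

Lemma zp x x' w w' : (eG x x' && ~~ eF w w') || ((x == x') && (w != w')) ->
  p x w *m p x' w' = 0.
Proof.
case/orP => /andP [H1 H2]; first exact: Ap.
by move/eqP: H1 => <-; apply: meas_orth.
Qed.

Lemma zq x x' w w' : (eH x x' && ~~ eK w w') || ((x == x') && (w != w')) ->
  q x w *m q x' w' = 0.
Proof.
case/orP => /andP [H1 H2]; first exact: Aq.
by move/eqP: H1 => <-; apply: meas_orth.
Qed.

Lemma zpq x x' w w' :
  ((eG x.1 x'.1 && ~~ eF w.1 w'.1) || ((x.1 == x'.1) && (w.1 != w'.1))) ||
  ((eH x.2 x'.2 && ~~ eK w.2 w'.2) || ((x.2 == x'.2) && (w.2 != w'.2))) ->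
  tensP p q x w *m tensP p q x' w' = 0.
Proof.
rewrite /tensP tensmx_mul; case/orP => [/zp -> | /zq ->].
  exact: tens0mx.
exact: tensmx0.
Qed.

Lemma gen (eGH : rel (VG * VH)) (eFK : rel (VF * VK)) :
  (forall x x' w w', eGH x x' -> ~~ eFK w w' ->
    ((eG x.1 x'.1 && ~~ eF w.1 w'.1) || ((x.1 == x'.1) && (w.1 != w'.1))) ||
    ((eH x.2 x'.2 && ~~ eK w.2 w'.2) || ((x.2 == x'.2) && (w.2 != w'.2)))) ->
  (0 < d1 * d2)%N -> quantum_hom eGH eFK.
Proof.
move=> H d0; exists (d1 * d2)%N, (tensP p q); split => //; split.
  exact: tensP_vertex.
move=> x x' Hx w w' Hw; apply: zpq; exact: H.
Qed.
End Main.

Theorem lemma7p1 (VG VH VF VK : finType)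
    (eG : rel VG) (eH : rel VH) (eF : rel VF) (eK : rel VK) :
  simple_graph eG -> simple_graph eH -> simple_graph eF -> simple_graph eK ->
  quantum_hom eG eF -> quantum_hom eH eK ->
  [/\ quantum_hom (cart_prod eG eH) (cart_prod eF eK),
      quantum_hom (cat_prod eG eH) (cat_prod eF eK),
      quantum_hom (strong_prod eG eH) (strong_prod eF eK),
      quantum_hom (disj_prod eG eH) (disj_prod eF eK)
    & quantum_hom (lex_prod eG eH) (lex_prod eF eK)].
Proof.
move=> _ _ _ _ [d1 [p [d1p [Hp Ap]]]] [d2 [q [d2p [Hq Aq]]]].
have d0 : (0 < d1 * d2)%N by rewrite muln_gt0 d1p d2p.
split; apply: (gen Hp Hq Ap Aq) => //;
  move=> [x1 x2] [x1' x2'] [w1 w2] [w1' w2'];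
  rewrite /strong_prod /cart_prod /cat_prod /disj_prod /lex_prod /=;
  move: (eG x1 x1') (eH x2 x2') (eF w1 w1') (eK w2 w2')
        (x1 == x1') (x2 == x2') (w1 == w1') (w2 == w2');
  by do 8! case.
Qed.
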